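(* Let $\Sigma$ be a first-order signature not containing the constant symbols $a,b$, and let $\alpha$ be a first-order (classical) sentence in $\Sigma$. Consider formulas over $\Sigma\cup\{a,b\}$ with $a,b$ non-rigid constants, and let $\eta := \big(\mathrm{dep}(a,b)\wedge \mathrm{dep}(b,a)\wedge \exists^{\mathsf i}x\,(x\neq b)\big)\to \exists^{\mathsf i}x\,(x\neq a)$, $\theta:=\exists^{\mathsf i}x\,\exists^{\mathsf i}y\,\neg(x=a\wedge y=b)$, and $\rho:=\forall x\forall y\,?(x=y)$. The following are equivalent: (1) $\alpha$ is finitely valid in first-order logic, i.e. true in every finite $\Sigma$-structure; (2) $\eta\to(\alpha\mathbin{\vee\!\!\!\vee}\theta)$ is id-valid in InqBQ; (3) $(\rho\wedge\eta)\to(\alpha\mathbin{\vee\!\!\!\vee}\theta)$ is valid in InqBQ.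
   Context: Inquisitive first-order logic InqBQ. A signature consists of predicate symbols and function symbols, each with an arity; function symbols are either rigid or non-rigid, and function symbols of arity $0$ are constant symbols. Terms are built from variables and function symbols as usual. Formulas are given by $\phi ::= P(t_1,\dots,t_n)\mid (t=t')\mid \bot\mid (\phi\wedge\phi)\mid(\phi\mathbin{\vee\!\!\!\vee}\phi)\mid(\phi\to\phi)\mid\forall x\phi\mid\exists^{\mathsf i}x\phi$, where $\mathbin{\vee\!\!\!\vee}$ is inquisitive disjunction and $\exists^{\mathsf i}$ is the inquisitive existential quantifier. Abbreviations: $\neg\phi:=\phi\to\bot$, $(t\neq t'):=\neg(t=t')$, $?\phi:=\phi\mathbin{\vee\!\!\!\vee}\neg\phi$; classical $\vee,\exists$ are $\neg(\neg\phi\wedge\neg\psi)$ and $\neg\forall x\neg\phi$. Formulas without $\mathbin{\vee\!\!\!\vee}$ and $\exists^{\mathsf i}$ are called classical; these are identified with ordinary first-order formulas. A first-order information model is $M=(W,D,I,\sim)$ with $W$ a non-empty set of worlds, $D$ a non-empty domain, $I$ assigning to each world $w$ an interpretation $I_w$ giving each $n$-ary predicate $P$ a relation $P_w\subseteq D^n$ and each $n$-ary function symbol $f$ a function $f_w:D^n\to D$ (rigid symbols get the same interpretation at every world), and $\sim$ assigning to each world $w$ an equivalence relation $\sim_w$ on $D$ that is a congruence for all $P_w$ and $f_w$. An id-model is one where every $\sim_w$ is the identity on $D$. Term values $[t]^g_w$ are defined as usual. Support at a state $s\subseteq W$ under assignment $g$: $M,s\models_g P(t_1,\dots,t_n)$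 iff $([t_1]^g_w,\dots,[t_n]^g_w)\in P_w$ for all $w\in s$; $M,s\models_g t=t'$ iff $[t]^g_w\sim_w[t']^g_w$ for all $w\in s$; $M,s\models_g\bot$ iff $s=\emptyset$; $\wedge$ is conjunction of support; $M,s\models_g\phi\mathbin{\vee\!\!\!\vee}\psi$ iff $M,s\models_g\phi$ or $M,s\models_g\psi$; $M,s\models_g\phi\to\psi$ iff for every $t\subseteq s$, $M,t\models_g\phi$ implies $M,t\models_g\psi$; $M,s\models_g\forall x\phi$ iff $M,s\models_{g[x\mapsto d]}\phi$ for all $d\in D$; $M,s\models_g\exists^{\mathsf i}x\phi$ iff $M,s\models_{g[x\mapsto d]}\phi$ for some $d\in D$. A formula is valid if it is supported in every model, state and assignment; id-valid if it is supported in every id-model, state and assignment. For a term $t$, $\lambda t:=\exists^{\mathsf i}x\,(x=t)$ with $x$ a variable not occurring in $t$, and $\mathrm{dep}(t,t'):=\lambda t\to\lambda t'$. *)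

(* Defs.v *)
From Stdlib Require Import List Arith Fin RelationClasses.

Record signature : Type := {
  psym : Type;
  fsym : Type;
  parity : psym -> nat;
  farity : fsym -> nat;
  rigid : fsym -> Prop
}.

Inductive term (S : signature) : Type :=
| Var : nat -> term S
| App : forall f : fsym S, (Fin.t (farity S f) -> term S) -> term S.
Arguments Var {S} _.
Arguments App {S} f _.

Inductive form (S : signature) : Type :=
| Pred : forall P : psym S, (Fin.t (parity S P) -> term S) -> form S
| Eq : term S -> term S -> form S
| Bot : form S
| And : form S -> form S -> form S
| IOr : form S -> form S -> form S
| Imp : form S -> form S -> form S
| All : nat -> form S -> form S
| IEx : nat -> form S -> form S.
Arguments Pred {S} P _.
Arguments Eq {S} _ _.
Arguments Bot {S}.
Arguments And {S} _ _.
Arguments IOr {S} _ _.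
Arguments Imp {S} _ _.
Arguments All {S} _ _.
Arguments IEx {S} _ _.

Definition Neg {S} (p : form S) : form S := Imp p Bot.
Definition Neq {S} (t t' : term S) : form S := Neg (Eq t t').
Definition Quest {S} (p : form S) : form S := IOr p (Neg p).

Fixpoint is_classical {S} (p : form S) : Prop :=
  match p with
  | Pred _ _ | Eq _ _ | Bot => True
  | And a b | Imp a b => is_classical a /\ is_classical b
  | IOr _ _ | IEx _ _ => False
  | All _ a => is_classical a
  end.

Fixpoint occurs_t {S} (x : nat) (t : term S) : Prop :=
  match t with
  | Var y => x = y
  | App f args => exists i, occurs_t x (args i)
  end.

Fixpoint free_in {S} (x : nat) (p : form S) : Prop :=
  match p with
  | Pred _ args => exists i, occurs_t x (args i)
  | Eq t t' => occurs_t x t \/ occurs_t x t'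
  | Bot => False
  | And a b | IOr a b | Imp a b => free_in x a \/ free_in x b
  | All y a | IEx y a => x <> y /\ free_in x a
  end.

Definition sentence {S} (p : form S) : Prop := forall x, ~ free_in x p.

Definition upd {D : Type} (g : nat -> D) (x : nat) (d : D) : nat -> D :=
  fun y => if Nat.eqb y x then d else g y.

Record structure (S : signature) : Type := {
  sdom : Type;
  sdom_ne : inhabited sdom;
  spint : forall P : psym S, (Fin.t (parity S P) -> sdom) -> Prop;
  sfint : forall f : fsym S, (Fin.t (farity S f) -> sdom) -> sdom
}.
Arguments sdom {S} _.
Arguments spint {S} _ _ _.
Arguments sfint {S} _ _ _.

Fixpoint seval {S} (A : structure S) (g : nat -> sdom A) (t : term S) : sdom A :=
  match t with
  | Var x => g x
  | App f args => sfint A f (fun i => seval A g (args i))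
  end.

(** Tarskian satisfaction (for classical formulas; inquisitive connectives
    are read classically, which is irrelevant for classical formulas). *)
Fixpoint sat {S} (A : structure S) (p : form S) (g : nat -> sdom A) : Prop :=
  match p with
  | Pred P args => spint A P (fun i => seval A g (args i))
  | Eq t t' => seval A g t = seval A g t'
  | Bot => False
  | And a b => sat A a g /\ sat A b g
  | IOr a b => sat A a g \/ sat A b g
  | Imp a b => sat A a g -> sat A b g
  | All x a => forall d, sat A a (upd g x d)
  | IEx x a => exists d, sat A a (upd g x d)
  end.

Definition finite_structure {S} (A : structure S) : Prop :=
  exists l : list (sdom A), forall d, In d l.

Definition finitely_valid {S} (p : form S) : Prop :=
  forall (A : structure S), finite_structure A -> forall g, sat A p g.

Record model (S : signature) : Type := {
  W : Type;
  D : Type;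
  W_ne : inhabited W;
  D_ne : inhabited D;
  pint : W -> forall P : psym S, (Fin.t (parity S P) -> D) -> Prop;
  fint : W -> forall f : fsym S, (Fin.t (farity S f) -> D) -> D;
  sim : W -> D -> D -> Prop;
  sim_equiv : forall w, Equivalence (sim w);
  sim_cong_p : forall w P (u v : Fin.t (parity S P) -> D),
      (forall i, sim w (u i) (v i)) -> pint w P u -> pint w P v;
  sim_cong_f : forall w f (u v : Fin.t (farity S f) -> D),
      (forall i, sim w (u i) (v i)) -> sim w (fint w f u) (fint w f v);
  fint_rigid : forall f, rigid S f ->
      forall w w' (u : Fin.t (farity S f) -> D), fint w f u = fint w' f u
}.
Arguments W {S} _.
Arguments D {S} _.
Arguments pint {S} _ _ _ _.
Arguments fint {S} _ _ _ _.
Arguments sim {S} _ _ _ _.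

Fixpoint eval {S} (M : model S) (w : W M) (g : nat -> D M) (t : term S) : D M :=
  match t with
  | Var x => g x
  | App f args => fint M w f (fun i => eval M w g (args i))
  end.

Fixpoint supp {S} (M : model S) (p : form S) (s : W M -> Prop) (g : nat -> D M) : Prop :=
  match p with
  | Pred P args => forall w, s w -> pint M w P (fun i => eval M w g (args i))
  | Eq t t' => forall w, s w -> sim M w (eval M w g t) (eval M w g t')
  | Bot => forall w, ~ s w
  | And a b => supp M a s g /\ supp M b s g
  | IOr a b => supp M a s g \/ supp M b s g
  | Imp a b => forall t : W M -> Prop, (forall w, t w -> s w) ->
                 supp M a t g -> supp M b t g
  | All x a => forall d, supp M a s (upd g x d)
  | IEx x a => exists d, supp M a s (upd g x d)
  end.

Definition valid {S} (p : form S) : Prop :=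
  forall (M : model S) (s : W M -> Prop) (g : nat -> D M), supp M p s g.

Definition id_model {S} (M : model S) : Prop :=
  forall w d e, sim M w d e <-> d = e.

Definition id_valid {S} (p : form S) : Prop :=
  forall (M : model S), id_model M ->
    forall (s : W M -> Prop) (g : nat -> D M), supp M p s g.

Definition ext_sig (S : signature) : signature := {|
  psym := psym S;
  fsym := (fsym S + bool)%type;
  parity := parity S;
  farity := fun f => match f with inl f => farity S f | inr _ => 0 end;
  rigid := fun f => match f with inl f => rigid S f | inr _ => False end
|}.

Fixpoint lift_t {S} (t : term S) : term (ext_sig S) :=
  match t with
  | Var x => Var x
  | App f args => @App (ext_sig S) (inl f) (fun i => lift_t (args i))
  end.

Fixpoint lift {S} (p : form S) : form (ext_sig S) :=
  match p with
  | Pred P args => @Pred (ext_sig S) P (fun i => lift_t (args i))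
  | Eq t t' => Eq (lift_t t) (lift_t t')
  | Bot => Bot
  | And a b => And (lift a) (lift b)
  | IOr a b => IOr (lift a) (lift b)
  | Imp a b => Imp (lift a) (lift b)
  | All x a => All x (lift a)
  | IEx x a => IEx x (lift a)
  end.

Definition const_a (S : signature) : term (ext_sig S) :=
  @App (ext_sig S) (inr true) (fun i : Fin.t 0 => Fin.case0 (fun _ => term (ext_sig S)) i).
Definition const_b (S : signature) : term (ext_sig S) :=
  @App (ext_sig S) (inr false) (fun i : Fin.t 0 => Fin.case0 (fun _ => term (ext_sig S)) i).

Definition vx {S} : term S := Var 0.
Definition vy {S} : term S := Var 1.

(** lambda t := exists^i x (x = t), for t a constant (x does not occur in t). *)
Definition lam {S} (t : term S) : form S := IEx 0 (Eq vx t).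
Definition dep {S} (t t' : term S) : form S := Imp (lam t) (lam t').

Definition eta (S : signature) : form (ext_sig S) :=
  let a := const_a S in let b := const_b S in
  Imp (And (dep a b) (And (dep b a) (IEx 0 (Neq vx b))))
      (IEx 0 (Neq vx a)).

Definition theta (S : signature) : form (ext_sig S) :=
  IEx 0 (IEx 1 (Neg (And (Eq vx (const_a S)) (Eq vy (const_b S))))).

Definition rho (S : signature) : form (ext_sig S) :=
  All 0 (All 1 (Quest (Eq vx vy))).

(* Main.v *)
Require Import Defs.
From Stdlib Require Import List Arith Lia RelationClasses Classical ClassicalEpsilon FunctionalExtensionality PropExtensionality ProofIrrelevance FinFun.

Definition term_ind' (S : signature) (P : term S -> Prop)
  (HV : forall n, P (Var n))
  (HA : forall f args, (forall i, P (args i)) -> P (App f args)) :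
  forall t, P t :=
  fix F t := match t with
  | Var n => HV n
  | App f args => HA f args (fun i => F (args i))
  end.

Definition mkS (S : signature) (Q : Type) (Qne : inhabited Q)
  (pI : forall P : psym S, (Fin.t (parity S P) -> Q) -> Prop)
  (fI : forall f : fsym S, (Fin.t (farity S f) -> Q) -> Q) : structure S :=
  {| sdom := Q; sdom_ne := Qne; spint := pI; sfint := fI |}.

Lemma sat_eta (S : signature) (A : structure S) p g :
  sat (mkS S (sdom A) (sdom_ne S A) (spint A) (sfint A)) p g <-> sat A p g.
Proof. destruct A; reflexivity. Qed.

Lemma upd_comp {X Y} (pi : X -> Y) g x d :
  (fun n => pi (upd g x d n)) = upd (fun n => pi (g n)) x (pi d).
Proof. apply functional_extensionality; intro n; unfold upd; destruct (Nat.eqb n x); auto. Qed.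


Lemma tc_term (S : signature) (M : model (ext_sig S)) (Q : Type) (Qne : inhabited Q)
  (pi : D M -> Q)
  (pI : W M -> forall P : psym S, (Fin.t (parity S P) -> Q) -> Prop)
  (fI : W M -> forall f : fsym S, (Fin.t (farity S f) -> Q) -> Q)
  (w : W M)
  (HF : forall f (u : Fin.t (farity S f) -> D M),
      pi (fint M w (inl f) u) = fI w f (fun i => pi (u i))) :
  forall tm g, pi (eval M w g (lift_t tm)) = seval (mkS S Q Qne (pI w) (fI w)) (fun n => pi (g n)) tm.
Proof.
  intros tm g. induction tm as [n|f args IH] using term_ind'.
  - reflexivity.
  - simpl. rewrite HF. f_equal. apply functional_extensionality; intro i. apply IH.
Qed.

Lemma tc (S : signature) (M : model (ext_sig S)) (Q : Type) (Qne : inhabited Q)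
  (pi : D M -> Q)
  (pI : W M -> forall P : psym S, (Fin.t (parity S P) -> Q) -> Prop)
  (fI : W M -> forall f : fsym S, (Fin.t (farity S f) -> Q) -> Q)
  (t : W M -> Prop)
  (Hsurj : forall q, exists d, pi d = q)
  (Hsim : forall w, t w -> forall d e, sim M w d e <-> pi d = pi e)
  (HP : forall w, t w -> forall P (u : Fin.t (parity S P) -> D M),
      pint M w P u <-> pI w P (fun i => pi (u i)))
  (HF : forall w, t w -> forall f (u : Fin.t (farity S f) -> D M),
      pi (fint M w (inl f) u) = fI w f (fun i => pi (u i))) :
  forall phi, is_classical phi -> forall s g, (forall w, s w -> t w) ->
   (supp M (lift phi) s g <->
    forall w, s w -> sat (mkS S Q Qne (pI w) (fI w)) phi (fun n => pi (g n))).
Proof.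
  induction phi as [P args|t1 t2| |a IHa b IHb|a IHa b IHb|a IHa b IHb|x a IHa|x a IHa];
    intros Hc s g Hst; simpl in Hc |- *.
  - split; intros H w Hw; specialize (H w Hw).
    + apply (HP w (Hst w Hw)) in H.
      assert (E : (fun i => pi (eval M w g (lift_t (args i)))) =
                  (fun i => seval (mkS S Q Qne (pI w) (fI w)) (fun n => pi (g n)) (args i))).
      { apply functional_extensionality; intro i. apply tc_term. apply HF, Hst, Hw. }
      rewrite E in H. exact H.
    + apply (HP w (Hst w Hw)).
      assert (E : (fun i => pi (eval M w g (lift_t (args i)))) =
                  (fun i => seval (mkS S Q Qne (pI w) (fI w)) (fun n => pi (g n)) (args i))).
      { apply functional_extensionality; intro i. apply tc_term. apply HF, Hst, Hw. }
      rewrite E. exact H.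
  - split; intros H w Hw; specialize (H w Hw).
    + apply (Hsim w (Hst w Hw)) in H.
      rewrite !(tc_term S M Q Qne pi pI fI w (HF w (Hst w Hw))) in H. exact H.
    + apply (Hsim w (Hst w Hw)).
      rewrite !(tc_term S M Q Qne pi pI fI w (HF w (Hst w Hw))). exact H.
  - firstorder.
  - destruct Hc as [Ha Hb].
    rewrite (IHa Ha s g Hst), (IHb Hb s g Hst). firstorder.
  - contradiction.
  - destruct Hc as [Ha Hb]. split.
    + intros H w Hw Hsa.
      assert (Hsub : forall w', w' = w -> s w') by (intros; subst; auto).
      specialize (H (fun w' => w' = w) Hsub).
      rewrite (IHa Ha _ g (fun w' h => Hst w' (Hsub w' h))),
              (IHb Hb _ g (fun w' h => Hst w' (Hsub w' h))) in H.
      apply H; auto. intros; subst; auto.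
    + intros H u Hu.
      rewrite (IHa Ha _ g (fun w' h => Hst w' (Hu w' h))),
              (IHb Hb _ g (fun w' h => Hst w' (Hu w' h))).
      intros H1 w Hw. apply H; auto.
  - split.
    + intros H w Hw q. destruct (Hsurj q) as [d <-].
      specialize (H d). rewrite (IHa Hc s _ Hst) in H.
      rewrite <- upd_comp. apply H, Hw.
    + intros H d. rewrite (IHa Hc s _ Hst). intros w Hw.
      rewrite upd_comp. apply H, Hw.
  - contradiction.
Qed.

Lemma ded (X : Type) :
  (forall f : X -> X, (forall x y, f x = f y -> x = y) -> forall y, exists x, f x = y) ->
  exists l : list X, forall x, In x l.
Proof.
  intros H. apply NNPP; intro Hn.
  assert (Hc : forall l : list X, exists x, ~ In x l).
  { intro l. apply NNPP; intro H1. apply Hn. exists l. intro x. apply NNPP; intro H2. apply H1; eauto. }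
  pose (ch := fun l => proj1_sig (constructive_indefinite_description _ (Hc l))).
  assert (chs : forall l, ~ In (ch l) l).
  { intro l; unfold ch; destruct constructive_indefinite_description; auto. }
  pose (L := fix L n := match n with 0 => nil | S n => ch (L n) :: L n end).
  pose (e := fun n => ch (L n)).
  assert (Hin : forall m n, m < n -> In (e m) (L n)).
  { intros m n; induction n; intro Hmn; [lia|]. simpl.
    destruct (Nat.eq_dec m n) as [->|]; [left; reflexivity| right; apply IHn; lia]. }
  assert (einj : forall m n, e m = e n -> m = n).
  { intros m n Hmn. destruct (lt_eq_lt_dec m n) as [[Hl|Hl]|Hl]; auto.
    - exfalso. apply (chs (L n)). fold (e n). rewrite <- Hmn. apply Hin, Hl.
    - exfalso. apply (chs (L m)). fold (e m). rewrite Hmn. apply Hin, Hl. }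
  pose (f := fun x => match excluded_middle_informative (exists n, x = e n) with
                      | left H => e (S (proj1_sig (constructive_indefinite_description _ H)))
                      | right _ => x end).
  assert (finj : forall x y, f x = f y -> x = y).
  { intros x y; unfold f.
    destruct excluded_middle_informative as [H1|H1];
    destruct excluded_middle_informative as [H2|H2].
    - destruct constructive_indefinite_description as [n Hn1];
      destruct constructive_indefinite_description as [m Hm1]; simpl.
      intro E. apply einj in E. injection E; intros; subst; auto.
    - destruct constructive_indefinite_description as [n Hn1]; simpl.
      intro E. exfalso; apply H2; eauto.
    - destruct constructive_indefinite_description as [n Hn1]; simpl.
      intro E. exfalso; apply H1; eauto.
    - auto. }
  destruct (H f finj (e 0)) as [x Hx]. revert Hx. unfold f.
  destruct excluded_middle_informative as [H1|H1].
  - destruct constructive_indefinite_description as [n Hn1]; simpl.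
    intro E. apply einj in E. discriminate.
  - intro E. apply H1. eauto.
Qed.

Lemma eval_a (S : signature) (M : model (ext_sig S)) w g g' :
  eval M w g (const_a S) = eval M w g' (const_a S).
Proof. simpl. f_equal. apply functional_extensionality; intro i. apply Fin.case0. exact i. Qed.
Lemma eval_b (S : signature) (M : model (ext_sig S)) w g g' :
  eval M w g (const_b S) = eval M w g' (const_b S).
Proof. simpl. f_equal. apply functional_extensionality; intro i. apply Fin.case0. exact i. Qed.

Lemma d32 (S : signature) (alpha : form S) :
  valid (Imp (And (rho S) (eta S)) (IOr (lift alpha) (theta S))) ->
  id_valid (Imp (eta S) (IOr (lift alpha) (theta S))).
Proof.
  intros H M Hid s g t Hts Heta.
  apply (H M s g t Hts). split; [|exact Heta].
  cbn [supp]. intros d e.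
  destruct (classic (d = e)) as [<-|Hne].
  - left. intros w _. apply Hid. reflexivity.
  - right. intros u _ Hu w Huw. apply Hne. apply (Hid w). exact (Hu w Huw).
Qed.

Definition pm_fint (S : signature) (A : structure S) (w : sdom A * sdom A)
  (f : fsym (ext_sig S)) : (Fin.t (farity (ext_sig S) f) -> sdom A) -> sdom A :=
  match f as f0 return (Fin.t (farity (ext_sig S) f0) -> sdom A) -> sdom A with
  | inl f => fun u => sfint A f u
  | inr true => fun _ => fst w
  | inr false => fun _ => snd w
  end.

Definition pmodel (S : signature) (A : structure S) : model (ext_sig S).
Proof.
  refine (@Build_model (ext_sig S) (sdom A * sdom A) (sdom A) _ _ (fun _ => spint A)
            (pm_fint S A) (fun _ => @eq (sdom A)) _ _ _ _).
  - destruct (sdom_ne S A) as [x]; exact (inhabits (x, x)).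
  - exact (sdom_ne S A).
  - intros w P u v Huv. replace v with u; auto. apply functional_extensionality; auto.
  - intros w f u v Huv. replace v with u; auto. apply functional_extensionality; auto.
  - intros [f|b] Hr w w' u; [reflexivity| contradiction].
Defined.

Lemma d21 (S : signature) (alpha : form S) :
  is_classical alpha ->
  id_valid (Imp (eta S) (IOr (lift alpha) (theta S))) -> finitely_valid alpha.
Proof.
  intros Hc H A [l Hl] g. apply NNPP; intro Hna.
  pose (M := pmodel S A).
  assert (Hid : id_model M) by (intros w d e; simpl; tauto).
  assert (Heta : supp M (eta S) (fun _ => True) g).
  { cbn [supp eta dep lam Neq Neg]. intros t _ [Hab [Hba [d0 Hd0]]].
    subst M; simpl in *; unfold upd in *; simpl in *.
    apply NNPP; intro Hn.
    idtac.
    assert (Hall : forall x, exists w, t w /\ fst w = x).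
    { intro x. apply NNPP; intro Hx. apply Hn. exists x. intros u Hu Hux w Huw.
      apply Hx. exists w. split; auto. symmetry. exact (Hux w Huw). }
    pose (ch := fun x => proj1_sig (constructive_indefinite_description _ (Hall x))).
    assert (chs : forall x, t (ch x) /\ fst (ch x) = x).
    { intro x; unfold ch; destruct constructive_indefinite_description; auto. }
    pose (h := fun x => snd (ch x)).
    assert (hinj : Injective h).
    { intros x y Hxy. destruct (chs x) as [Htx Hfx]. destruct (chs y) as [Hty Hfy].
      destruct (Hba (fun w => w = ch x \/ w = ch y)) as [e He].
      - intros w [->| ->]; auto.
      - exists (snd (ch x)). intros w [->| ->]; simpl; auto.
      - simpl in He. rewrite <- Hfx, <- Hfy.
        rewrite <- (He (ch x)), <- (He (ch y)); auto. }
    assert (hs : Surjective h).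
    { apply (Endo_Injective_Surjective (A := sdom A)); auto.
      - exists l; exact Hl.
      - intros x y; apply classic. }
    destruct (hs d0) as [x Hx].
    apply (Hd0 (fun w => w = ch x)) with (w := ch x); auto.
    - intros w ->. apply chs.
    - intros w ->. symmetry. exact Hx. }
  destruct (H M Hid (fun _ => True) g (fun _ => True) (fun _ _ => I) Heta) as [Ha|Ht].
  - apply Hna. set (w0 := (g 0, g 0) : W M).
    pose proof (tc S M (sdom A) (sdom_ne S A) (fun x => x) (fun _ => spint A) (fun _ => sfint A)
                  (fun _ => True)) as T.
    refine (proj1 (sat_eta S A alpha g) _).
    refine (proj1 (T _ _ _ _ alpha Hc (fun _ => True) g (fun _ _ => I)) Ha w0 I).
    + intro q; exists q; auto.
    + intros; simpl; tauto.
    + intros; simpl; tauto.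
    + intros; reflexivity.
  - destruct Ht as [d [e Hde]].
    apply (Hde (fun w => w = (d, e))) with (w := (d, e)); auto.
    split; intros w ->; reflexivity.
Qed.

Lemma sig_ext {X} (P : X -> Prop) (c1 c2 : {x | P x}) : proj1_sig c1 = proj1_sig c2 -> c1 = c2.
Proof. destruct c1, c2; simpl; intro; subst; f_equal; apply proof_irrelevance. Qed.

Lemma d13 (S : signature) (alpha : form S) :
  is_classical alpha -> finitely_valid alpha ->
  valid (Imp (And (rho S) (eta S)) (IOr (lift alpha) (theta S))).
Proof.
  intros Hc Hfv M s g t Hts [Hrho Heta].
  destruct (classic (supp M (theta S) t g)) as [Hth|Hth]; [right; exact Hth| left].
  pose (a := fun w => eval M w g (const_a S)).
  pose (b := fun w => eval M w g (const_b S)).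
  assert (Hsurj2 : forall d e, exists w, t w /\ sim M w d (a w) /\ sim M w e (b w)).
  { intros d e. apply NNPP; intro Hn. apply Hth. cbn [supp theta Neg]. exists d, e.
    intros u Hu [H1 H2] w Huw. apply Hn. exists w. split; [auto|]. split.
    - specialize (H1 w Huw). unfold a. rewrite (eval_a S M w g (upd (upd g 0 d) 1 e)). exact H1.
    - specialize (H2 w Huw). unfold b. rewrite (eval_b S M w g (upd (upd g 0 d) 1 e)). exact H2. }
  destruct (D_ne _ M) as [d00].
  destruct (Hsurj2 d00 d00) as [w0 [Hw0 _]].
  pose (R := sim M w0).
  assert (Hrho' : forall w, t w -> forall d e, sim M w d e <-> R d e).
  { intros w Hw d e. cbn [supp rho Quest Neg] in Hrho. destruct (Hrho d e) as [H1|H1].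
    - split; intros _; [apply (H1 w0 Hw0) | apply (H1 w Hw)].
    - split; intro H2; exfalso.
      + apply (H1 (fun w' => w' = w)) with (w := w); auto. intros; subst; auto.
        intros; subst; auto.
      + apply (H1 (fun w' => w' = w0)) with (w := w0); auto. intros; subst; auto.
        intros; subst; auto. }
  pose proof (sim_equiv _ M w0) as Req. fold R in Req.
  pose (Q := {c : D M -> Prop | exists d, c = R d}).
  pose (pi := fun d => exist (fun c => exists d', c = R d') (R d) (ex_intro _ d eq_refl) : Q).
  assert (Hpi : forall d e, pi d = pi e <-> R d e).
  { intros d e; split.
    - intro E. apply (f_equal (@proj1_sig _ _)) in E. simpl in E.
      rewrite E. reflexivity.
    - intro Hde. apply sig_ext. simpl. apply functional_extensionality; intro x.
      apply propositional_extensionality. split; intro H.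
      + transitivity d; [symmetry; exact Hde | exact H].
      + transitivity e; [exact Hde | exact H]. }
  assert (Hsurj : forall q, exists d, pi d = q).
  { intros [c [d ->]]. exists d. apply sig_ext. reflexivity. }
  pose (rep := fun q => proj1_sig (constructive_indefinite_description _ (Hsurj q))).
  assert (Hrep : forall q, pi (rep q) = q).
  { intro q; unfold rep; destruct constructive_indefinite_description; auto. }
  assert (Hsim : forall w, t w -> forall d e, sim M w d e <-> pi d = pi e).
  { intros w Hw d e. rewrite Hrho' by auto. symmetry; apply Hpi. }
  pose (pI := fun w P (v : Fin.t (parity S P) -> Q) => pint M w P (fun i => rep (v i))).
  pose (fI := fun w f (v : Fin.t (farity S f) -> Q) => pi (fint M w (inl f) (fun i => rep (v i)))).
  assert (Qfin : exists l : list Q, forall q, In q l).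
  { apply ded. intros f finj q0. apply NNPP; intro Hq0.
    pose (u := fun w => t w /\ pi (b w) = f (pi (a w))).
    cbn [supp eta dep lam Neq Neg] in Heta.
    destruct (Heta u (fun w h => proj1 h)) as [d Hd].
    - split; [|split].
      + intros v Hv [d Hd]. exists (rep (f (pi d))). intros w Hw.
        destruct (Hv w Hw) as [Htw Hbw].
        specialize (Hd w Hw). change (sim M w d (eval M w (upd g 0 d) (const_a S))) in Hd.
        rewrite (eval_a S M w _ g) in Hd. fold (a w) in Hd.
        change (sim M w (rep (f (pi d))) (eval M w (upd g 0 (rep (f (pi d)))) (const_b S))).
        rewrite (eval_b S M w _ g). fold (b w).
        apply (Hsim w Htw). rewrite Hrep, Hbw. f_equal. apply (Hsim w Htw); auto.
      + intros v Hv [d Hd].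
        destruct (classic (exists w1, v w1)) as [[w1 Hw1]|Hnv].
        * exists (a w1). intros w Hw.
          change (sim M w (a w1) (eval M w (upd g 0 (a w1)) (const_a S))).
          rewrite (eval_a S M w _ g). fold (a w).
          destruct (Hv w Hw) as [Htw Hbw]. destruct (Hv w1 Hw1) as [Htw1 Hbw1].
          apply (Hsim w Htw). apply finj. rewrite <- Hbw, <- Hbw1.
          pose proof (Hd w Hw) as E1. pose proof (Hd w1 Hw1) as E2.
          change (sim M w d (eval M w (upd g 0 d) (const_b S))) in E1.
          change (sim M w1 d (eval M w1 (upd g 0 d) (const_b S))) in E2.
          rewrite (eval_b S M w _ g) in E1. rewrite (eval_b S M w1 _ g) in E2.
          apply (Hsim w Htw) in E1. apply (Hsim w1 Htw1) in E2. fold (b w) in E1. fold (b w1) in E2.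
          rewrite <- E1, <- E2. reflexivity.
        * exists d00. intros w Hw. exfalso; eauto.
      + exists (rep q0). intros v Hv Hb w Hw.
        destruct (Hv w Hw) as [Htw Hbw].
        specialize (Hb w Hw). change (sim M w (rep q0) (eval M w (upd g 0 (rep q0)) (const_b S))) in Hb.
        rewrite (eval_b S M w _ g) in Hb. fold (b w) in Hb.
        apply (Hsim w Htw) in Hb. rewrite Hrep in Hb. apply Hq0. exists (pi (a w)).
        rewrite <- Hbw. symmetry; exact Hb.
    - destruct (Hsurj2 d (rep (f (pi d)))) as [w [Htw [Hda Heb]]].
      apply (Hd (fun w' => w' = w)) with (w := w); auto.
      + intros w' ->. split; auto. apply (Hsim w Htw) in Hda. apply (Hsim w Htw) in Heb.
        rewrite <- Heb, Hrep, Hda. reflexivity.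
      + intros w' ->. change (sim M w d (eval M w (upd g 0 d) (const_a S))).
        rewrite (eval_a S M w _ g). exact Hda. }
  assert (Qne : inhabited Q) by exact (inhabits (pi d00)).
  assert (HP : forall w, t w -> forall P (u : Fin.t (parity S P) -> D M),
      pint M w P u <-> pI w P (fun i => pi (u i))).
  { intros w Hw P u. unfold pI. split; apply (sim_cong_p _ M); intro i;
      apply (Hsim w Hw); rewrite Hrep; reflexivity. }
  assert (HF : forall w, t w -> forall f (u : Fin.t (farity S f) -> D M),
      pi (fint M w (inl f) u) = fI w f (fun i => pi (u i))).
  { intros w Hw f u. unfold fI. apply (Hsim w Hw). apply (sim_cong_f _ M); intro i;
      apply (Hsim w Hw); rewrite Hrep; reflexivity. }
  apply (proj2 (tc S M Q Qne pi pI fI t Hsurj Hsim HP HF alpha Hc t g (fun w h => h))).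
  intros w Hw. apply Hfv. destruct Qfin as [l Hl]. exists l. exact Hl.
Qed.
Theorem mainTheorem7 (S : signature) (alpha : form S) :
  is_classical alpha -> sentence alpha ->
  (finitely_valid alpha <->
     id_valid (Imp (eta S) (IOr (lift alpha) (theta S))))
  /\
  (id_valid (Imp (eta S) (IOr (lift alpha) (theta S))) <->
     valid (Imp (And (rho S) (eta S)) (IOr (lift alpha) (theta S)))).
Proof.
  intros Hc _. split; split; intro H.
  - apply d32, d13; auto.
  - apply d21; auto.
  - apply d13, d21; auto.
  - apply d32; auto.
Qed.
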